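(* For coalescing random walks on a finite Markov chain and any $M\in\mathbb Z_+$ and $t\ge0$, \[\mathbb{E}(N_t^{-1}\mathbf 1[N_t\ge M])=\mathbb P(n_t\ge M)\quad\text{and}\quad\mathbb{E}(N_t^{-1}\mathbf 1[N_t\le M])=\mathbb P(0<n_t\le M).\]
   Context: $(V,\mathbf r)$ is a continuous-time irreducible Markov chain on a finite set $V$, $|V|=n$, with symmetric rates. Coalescing random walks via the graphical representation (directed edge $(x,y)$ rings at rate $r_{x,y}$, moving any particle at $x$ to $y$); $X_1,\dots,X_n$ are the paths of the particles started at the $n$ states; $\mathcal C(P,Q)=\inf\{t:P(t)=Q(t)\}$; with $\iota$ uniform on $\{1,\dots,n\}$, $N_t:=|\{i:\mathcal C(X_i,X_\iota)\le t\}|$. Voter model: initially all voters have distinct opinions; at rate $r_{x,y}$ voter $y$ adopts the opinion of $x$. $\zeta^x_t$ is the set of voters whose opinion at time $t$ equals the initial opinion of $x$, and $n_t:=|\zeta^{\mathcal U}_t|$ with $\mathcal U$ uniform on $V$ and independent of the voter model. *)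

(* Defs.v *)
From HB Require Import structures.
From mathcomp Require Import all_boot all_order all_algebra.
From mathcomp Require Import all_classical all_reals all_analysis.
Set Implicit Arguments. Unset Strict Implicit. Unset Printing Implicit Defensive.
Import Order.TTheory GRing.Theory Num.Theory.
Local Open Scope ring_scope.

(* Graphical representation on the time window [0,t]: only the time-ordered
   sequence s = [:: e_1; ...; e_k] of directed edges e = (x,y) that ring in
   [0,t] matters for both processes.  For independent Poisson clocks of rates
   r_{x,y}, P(the ordered sequence of rings in [0,t] is exactly s)
     = exp(-lambda t) t^k / k! * prod_i r_{e_i},  lambda = sum_{x,y} r_{x,y}. *)

Section Defs.
Variable V : finType.

Definition crw_step (e : V * V) (p : V) : V := if p == e.1 then e.2 else p.
Definition crw_pos (s : seq (V * V)) (i : V) : V :=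
  foldl (fun p e => crw_step e p) i s.
Definition coalesced_by (s : seq (V * V)) (i j : V) : bool :=
  [exists k : 'I_(size s).+1, crw_pos (take k s) i == crw_pos (take k s) j].
(* N_t given the rings s and the tagged particle iota *)
Definition N_of (s : seq (V * V)) (iota : V) : nat :=
  #|[set i | coalesced_by s i iota]|.

(* voter model: ring of (x,y) makes voter y adopt the opinion of x;
   voter_state s y = the voter whose initial opinion y holds after s *)
Definition voter_step (e : V * V) (op : V -> V) : V -> V :=
  fun y => if y == e.2 then op e.1 else op y.
Definition voter_state (s : seq (V * V)) : V -> V :=
  foldl (fun op e => voter_step e op) id s.
Definition zeta (s : seq (V * V)) (x : V) : {set V} :=
  [set y | voter_state s y == x].
(* n_t given the rings s and the uniform voter U = u *)
Definition n_of (s : seq (V * V)) (u : V) : nat := #|zeta s u|.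

Variable R : realType.

Definition total_rate (r : V -> V -> R) : R := \sum_(e : V * V) r e.1 e.2.

Definition ring_law (r : V -> V -> R) (t : R) (s : seq (V * V)) : R :=
  expR (- (total_rate r * t)) * t ^+ size s / (size s)`!%:R
  * \prod_(e <- s) r e.1 e.2.

(* expectation of f(rings in [0,t], W) with W uniform on V, independent *)
Definition Egr (r : V -> V -> R) (t : R) (f : seq (V * V) -> V -> R) : \bar R :=
  (\sum_(0 <= k <oo)
     ((\sum_(s : k.-tuple (V * V))
         ring_law r t s * (#|V|%:R^-1 * \sum_(w : V) f s w))%:E))%E.

Definition irreducible_rates (r : V -> V -> R) : Prop :=
  forall x y : V, connect [rel a b | 0 < r a b] x y.

End Defs.

(* Main.v *)
Require Import Defs.
From HB Require Import structures.
From mathcomp Require Import all_boot all_order all_algebra.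
From mathcomp Require Import all_classical all_reals all_analysis.
Import Order.TTheory GRing.Theory Num.Theory.
Local Open Scope ring_scope.

Section S.
Variable V : finType.
Definition sw (e : V * V) : V * V := (e.2, e.1).
Lemma swK : involutive sw. Proof. by case. Qed.

Lemma crw_cat (s1 s2 : seq (V*V)) i : crw_pos (s1 ++ s2) i = crw_pos s2 (crw_pos s1 i).
Proof. by rewrite /crw_pos foldl_cat. Qed.

Lemma coalescedE (s : seq (V*V)) (i j : V) : coalesced_by s i j = (crw_pos s i == crw_pos s j).
Proof.
apply/existsP/eqP => [[k /eqP Hk]|H].
  by rewrite -(cat_take_drop k s) !crw_cat Hk.
exists ord_max => /=; by rewrite take_size H.
Qed.

Lemma voter_dual (s : seq (V*V)) (y : V) : voter_state (rev (map sw s)) y = crw_pos s y.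
Proof.
elim: s y => [//|e s IH] y.
rewrite /= rev_cons /voter_state foldl_rcons -/(voter_state (rev (map sw s))).
rewrite /voter_step /= !IH /crw_pos /= -/(crw_pos s _) /crw_step.
by case: eqP.
Qed.

Variable R : realType.
Lemma count_lemma (p : V -> V) (phi : nat -> R) :
  \sum_i ((#|[set j | p j == p i]|)%:R^-1 * phi #|[set j | p j == p i]|)
  = \sum_u ((0 < #|[set j | p j == u]|)%N%:R * phi #|[set j | p j == u]|).
Proof.
rewrite (partition_big p predT) //=; apply: eq_bigr => u _.
rewrite (eq_bigr (fun _ => (#|[set j | p j == u]|)%:R^-1 * phi #|[set j | p j == u]|)); last by move=> i /eqP ->.
have -> : forall G : R, \sum_(i | p i == u) G = \sum_(i in [set j | p j == u]) G.
  by move=> G; apply: eq_bigl => i; rewrite inE.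
rewrite sumr_const.
case: (posnP #|[set j | p j == u]|) => [->|n0]; first by rewrite !mulr0n mul0r.
rewrite -[LHS]mulr_natr mulrAC mulVf; last by rewrite pnatr_eq0 -lt0n.
by rewrite mul1r.
Qed.
End S.

Section M.
Variable R : realType.
Variable V : finType.

Definition tau {k} (s : k.-tuple (V*V)) : k.-tuple (V*V) := [tuple of rev (map (@sw V) s)].
Lemma tauK k : involutive (@tau k).
Proof. by move=> s; apply: val_inj; rewrite /= map_rev revK -map_comp map_id_in // => e _; rewrite /= swK. Qed.

Lemma ring_law_tau (r : V -> V -> R) t k (s : k.-tuple (V*V)) :
  (forall x y, r x y = r y x) -> ring_law r t (tau s) = ring_law r t s.
Proof.
move=> hs; rewrite /ring_law /= size_rev size_map big_rev big_map.
by congr (_ * _); apply: eq_bigr => e _; rewrite hs.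
Qed.

Lemma Egr_ext r t (f g : seq (V*V) -> V -> R) :
  (forall k, \sum_(s : k.-tuple (V * V)) ring_law r t s * (#|V|%:R^-1 * \sum_(w : V) f s w)
   = \sum_(s : k.-tuple (V * V)) ring_law r t s * (#|V|%:R^-1 * \sum_(w : V) g s w)) ->
  Egr r t f = Egr r t g.
Proof. move=> H; rewrite /Egr; do 2 f_equal; apply: funext => n; do 2 f_equal; apply: funext => k; by rewrite H. Qed.

Lemma main_k r t (f g : seq (V*V) -> V -> R) k :
  (forall x y, r x y = r y x) ->
  (forall s, \sum_w f s w = \sum_w g (rev (map (@sw V) s)) w) ->
  \sum_(s : k.-tuple (V * V)) ring_law r t s * (#|V|%:R^-1 * \sum_(w : V) f s w)
   = \sum_(s : k.-tuple (V * V)) ring_law r t s * (#|V|%:R^-1 * \sum_(w : V) g s w).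
Proof.
move=> hs H; rewrite [RHS](reindex_inj (can_inj (@tauK k))) /=.
by apply: eq_bigr => s _; rewrite ring_law_tau // H.
Qed.
Lemma Egr_dual r t (f g : seq (V*V) -> V -> R) :
  (forall x y, r x y = r y x) ->
  (forall s, \sum_w f s w = \sum_w g (rev (map (@sw V) s)) w) ->
  Egr r t f = Egr r t g.
Proof. by move=> hs H; apply: Egr_ext => k; apply: main_k. Qed.
End M.

Lemma N_ofE (V : finType) (s : seq (V*V)) i : N_of s i = #|[set j | crw_pos s j == crw_pos s i]|.
Proof. by rewrite /N_of; apply: eq_card => j; rewrite !inE coalescedE. Qed.

Lemma n_ofE (V : finType) (s : seq (V*V)) u : n_of (rev (map (@sw V) s)) u = #|[set j | crw_pos s j == u]|.
Proof. by rewrite /n_of /zeta; apply: eq_card => j; rewrite !inE voter_dual. Qed.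

Theorem corollary2p2 (R : realType) (V : finType) (r : V -> V -> R)
    (M : nat) (t : R) :
  (0 < #|V|)%N ->
  (forall x y : V, 0 <= r x y) ->
  (forall x y : V, r x y = r y x) ->
  irreducible_rates r ->
  (0 < M)%N -> 0 <= t ->
  Egr r t (fun s i => (N_of s i)%:R^-1 * (M <= N_of s i)%N%:R)
    = Egr r t (fun s u => (M <= n_of s u)%N%:R)
  /\
  Egr r t (fun s i => (N_of s i)%:R^-1 * (N_of s i <= M)%N%:R)
    = Egr r t (fun s u => ((0 < n_of s u) && (n_of s u <= M))%N%:R).
Proof.
move=> _ _ hs _ M0 _; split; apply: Egr_dual => // s.
- under eq_bigr do rewrite N_ofE.
  rewrite (@count_lemma V R (crw_pos s) (fun n => (M <= n)%N%:R)).
  apply: eq_bigr => u _; rewrite n_ofE.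
  have [E|E] := posnP #|[set j | crw_pos s j == u]|; rewrite ?E /=.
  + by rewrite leqNgt M0 mul0r.
  + by rewrite mul1r.
- under eq_bigr do rewrite N_ofE.
  rewrite (@count_lemma V R (crw_pos s) (fun n => (n <= M)%N%:R)).
  apply: eq_bigr => u _; rewrite n_ofE.
  have [E|E] := posnP #|[set j | crw_pos s j == u]|; rewrite ?E /=.
  + by rewrite mul0r.
  + by rewrite mul1r.
Qed.
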